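(* Let $\varphi$ be a basic existential or basic universal sentence of spread $m$ and range $r'$ over a graph language $L$, and let $C,M\notin L$ be distinct unary predicate symbols. Let $G$ be an $L$-interpretation with $G\models\varphi$, and let $\lambda$ be a layering of $\overline G$. Let $r\ge r'$ and $\ell>2r(3m+1)$ be integers. Then for all but at most $6rm$ of the $(\ell,r)$-covers of integers $R$, there exists an $m$-plan $p$ for $R$ such that for each $I\in R$, $$G[\lambda^{-1}(I)],\ C:=\lambda^{-1}(M_{2r}(I)),\ M:=\lambda^{-1}(M_r(I))\models\varphi^{(p(I))}.$$
   Context: A graph language $L$ consists of a binary predicate symbol $e$ and a finite set of unary predicate symbols. An $L$-interpretation $G$ consists of a graph $\overline G$ and a set $S_C\subseteq V(\overline G)$ for each unary $C\in L$; $e$ is interpreted as adjacency in $\overline G$. For $S\subseteq V(\overline G)$, $G[S]$ is the interpretation on $\overline G[S]$ with each unary predicate restricted to $S$; ''$H, C:=A, M:=B$'' denotes the expansion of $H$ with new unary predicates $C,M$ interpreted as $A,B$. A layering of a graph is a function $\lambda:V\to\mathbb Z$ with $|\lambda(u)-\lambda(v)|\le1$ on edges. $d(x,y)\le r$ abbreviates $(\exists z_0,\dots,z_r)\,z_0=x\land z_r=y\land\bigwedge_{i=1}^r(z_{i-1}=z_i\lor e(z_{i-1},z_i))$. An $r$-local formula is a formula $\psi$ with one free variable $x$ in which all quantifications are of the form $(\exists y: d(x,y)\le r)$ or $(\forall y: d(x,y)\le r)$. A basic existential sentence is one of the form $(\exists x_1,\dots,x_m)\bigwedge_{1\le i<j\le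 m}d(x_i,x_j)>2r\land\bigwedge_{i=1}^m\psi(x_i)$, and a basic universal sentence is one of the form $(\forall x_1,\dots,x_{m+1})\bigl(\bigwedge_{1\le i<j\le m+1}d(x_i,x_j)>2r\bigr)\Rightarrow\bigvee_{i=1}^{m+1}\psi(x_i)$, where in both cases $\psi$ is $r$-local; $m$ is the spread, $r$ the range and $\psi$ the core. For such $\varphi$ and an integer $k\ge0$, the $(C,M,k)$-variant $\varphi^{(k)}$ is $(\exists x_1,\dots,x_k)\bigwedge_{1\le i<j\le k}d(x_i,x_j)>2r\land\bigwedge_{i=1}^k(C(x_i)\land\psi(x_i))$ if $\varphi$ is basic existential, and $(\forall x_1,\dots,x_{k+1})\bigl(\bigwedge_{i=1}^{k+1}M(x_i)\land\bigwedge_{1\le i<j\le k+1}d(x_i,x_j)>2r\bigr)\Rightarrow\bigvee_{i=1}^{k+1}\psi(x_i)$ if $\varphi$ is basic universal. For integers $\ell\ge 2r+1$ and $n$, the set of all intervals $\{i,i+1,\dots,i+\ell-1\}$ with $i\equiv n\pmod{\ell-2r}$ is an $(\ell,r)$-cover of integers (there are exactly $\ell-2r$ distinct ones). For an integer $d\ge0$ and $I=\{i,\dots,i+\ell-1\}$ in a cover, $M_d(I)=\{i+d,\dots,i+\ell-d-1\}$. An $m$-plan for a cover $R$ is a function $p:R\to\mathbb Z_{\ge0}$ with $\sum_{I\in R}p(I)=m$. *)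

(* Defs.v *)
From mathcomp Require Import all_boot all_order all_algebra.
Set Implicit Arguments. Unset Strict Implicit. Unset Printing Implicit Defensive.
Import Order.TTheory GRing.Theory Num.Theory.
Local Open Scope ring_scope.

(* An L-interpretation is given by a finite vertex type V, an adjacency
   relation [adj] (the graph, symmetric and irreflexive) and the interpretation
   [lab c] of each unary predicate symbol c (symbols are natural numbers).
   An induced sub-interpretation G[S] is represented by restricting the
   domain of quantification to S : {set V} (edges and unary predicates are then
   automatically restricted to S, since they are only ever evaluated at
   elements of S). *)

(* Semantics of the formula  d(x,y) <= n  in the interpretation with domain D:
   exists z_0..z_n in D with z_0 = x, z_n = y and z_{i-1} = z_i \/ e(z_{i-1},z_i). *)
Fixpoint dle (V : finType) (adj : rel V) (D : {set V}) (n : nat) (x y : V) : Prop :=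
  match n with
  | 0 => x = y
  | n'.+1 => exists z, z \in D /\ dle adj D n' x z /\ (z = y \/ adj z y)
  end.

(* Syntax of r-local formulas with the single free variable x.
   Terms: the free variable x ([LX]) or a bound variable (de Bruijn index).
   [LExB f] is (exists y : d(x,y) <= r) f, [LAllB f] is (forall y : d(x,y) <= r) f,
   where y is the new bound variable (index 0). *)
Inductive lterm := LX | LB of nat.

Inductive lform :=
| LTrue | LFalse
| LEq of lterm & lterm
| LAdj of lterm & lterm
| LLab of nat & lterm
| LNot of lform
| LAnd of lform & lform
| LOr of lform & lform
| LExB of lform
| LAllB of lform.

Definition leval (V : Type) (x : V) (env : seq V) (t : lterm) : V :=
  match t with LX => x | LB n => nth x env n end.

Fixpoint lsat (V : finType) (adj : rel V) (lab : nat -> {set V}) (D : {set V})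
    (r : nat) (x : V) (env : seq V) (f : lform) : Prop :=
  match f with
  | LTrue => True
  | LFalse => False
  | LEq t u => leval x env t = leval x env u
  | LAdj t u => adj (leval x env t) (leval x env u)
  | LLab c t => leval x env t \in lab c
  | LNot g => ~ lsat adj lab D r x env g
  | LAnd g h => lsat adj lab D r x env g /\ lsat adj lab D r x env h
  | LOr g h => lsat adj lab D r x env g \/ lsat adj lab D r x env h
  | LExB g => exists y, y \in D /\ dle adj D r x y /\ lsat adj lab D r x (y :: env) g
  | LAllB g => forall y, y \in D -> dle adj D r x y -> lsat adj lab D r x (y :: env) g
  end.

Definition core_sat (V : finType) (adj : rel V) (lab : nat -> {set V}) (D : {set V})
    (r : nat) (psi : lform) (x : V) : Prop := lsat adj lab D r x [::] psi.

Definition basic_sat (V : finType) (adj : rel V) (lab : nat -> {set V}) (D : {set V})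
    (ex : bool) (m r : nat) (psi : lform) : Prop :=
  if ex then
    exists xs : 'I_m -> V,
      (forall i, xs i \in D) /\
      (forall i j : 'I_m, (i < j)%N -> ~ dle adj D (2 * r) (xs i) (xs j)) /\
      (forall i, core_sat adj lab D r psi (xs i))
  else
    forall xs : 'I_m.+1 -> V,
      (forall i, xs i \in D) ->
      (forall i j : 'I_m.+1, (i < j)%N -> ~ dle adj D (2 * r) (xs i) (xs j)) ->
      exists i, core_sat adj lab D r psi (xs i).

(* Satisfaction of the (C,M,k)-variant of the basic sentence, in the expansion of the
   interpretation with domain D by C := Cs and M := Ms. *)
Definition variant_sat (V : finType) (adj : rel V) (lab : nat -> {set V}) (D : {set V})
    (Cs Ms : {set V}) (ex : bool) (r : nat) (psi : lform) (k : nat) : Prop :=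
  if ex then
    exists xs : 'I_k -> V,
      (forall i, xs i \in D) /\
      (forall i j : 'I_k, (i < j)%N -> ~ dle adj D (2 * r) (xs i) (xs j)) /\
      (forall i, xs i \in Cs /\ core_sat adj lab D r psi (xs i))
  else
    forall xs : 'I_k.+1 -> V,
      (forall i, xs i \in D) ->
      (forall i, xs i \in Ms) ->
      (forall i j : 'I_k.+1, (i < j)%N -> ~ dle adj D (2 * r) (xs i) (xs j)) ->
      exists i, core_sat adj lab D r psi (xs i).

Definition layering (V : finType) (adj : rel V) (lam : V -> int) : Prop :=
  forall u v, adj u v -> `|lam u - lam v| <= 1.

(* lam^{-1}(M_d(I)) for I = {i, ..., i + l - 1}, i.e. vertices with layer in
   {i + d, ..., i + l - d - 1}; d = 0 gives lam^{-1}(I). *)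
Definition layer_set (V : finType) (lam : V -> int) (i : int) (l d : nat) : {set V} :=
  [set v | (i + d%:Z <= lam v) && (lam v <= i + l%:Z - d%:Z - 1)].

(* An m-plan for the cover whose intervals are indexed by q : int
   (interval number q starts at n + q (l - 2r)): a finitely supported
   function p : int -> nat with total sum m. *)
Definition is_plan (m : nat) (p : int -> nat) : Prop :=
  exists s : seq int, uniq s /\ (forall q, q \notin s -> p q = 0%N) /\
    (\sum_(q <- s) p q)%N = m.

(* Main.v *)
Require Import Defs.
From mathcomp Require Import all_boot all_order all_algebra.
From mathcomp Require Import zify.
From Stdlib Require Import Classical.
Import Order.TTheory GRing.Theory Num.Theory.
Set Implicit Arguments. Unset Strict Implicit. Unset Printing Implicit Defensive.
Local Open Scope ring_scope.

Lemma dle_sub (V : finType) (adj : rel V) (D D' : {set V}) k x y :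
  D \subset D' -> dle adj D k x y -> dle adj D' k x y.
Proof.
move=> sDD'; elim: k y => [|k IH] y //=.
case=> z [zD [Hxz Hzy]]; exists z; split; first exact: (subsetP sDD').
by split; first exact: IH.
Qed.

Lemma dle_lam (V : finType) (adj : rel V) (lam : V -> int) (D : {set V}) k x y :
  layering adj lam -> dle adj D k x y -> lam x - k%:Z <= lam y <= lam x + k%:Z.
Proof.
move=> Hl; elim: k y => [|k IH] y /=; first by move=> ->; lia.
case=> z [_ [/IH Hxz [<-|/Hl Hzy]]]; lia.
Qed.

Lemma dle_concat (V : finType) (adj : rel V) (D : {set V}) (a b : nat) (u w v : V) :
  dle adj D a u w -> dle adj D b w v -> dle adj D (a + b) u v.
Proof.
elim: b v => [|b IH] v; first by rewrite addn0 /= => H <-.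
rewrite addnS /= => Huw [z [zD [Hwz Hzv]]].
by exists z; split => //; split => //; exact: IH.
Qed.

Lemma dle_split (V : finType) (adj : rel V) (D : {set V}) a b u v :
  dle adj D (a + b) u v -> exists w, dle adj D a u w /\ dle adj D b w v.
Proof.
elim: b v => [|b IH] v; first by rewrite addn0 => H; exists v.
rewrite addnS /= => [[z [zD [/IH [w [Huw Hwz]] Hzv]]]].
by exists w; split => //; exists z.
Qed.

Lemma dle_refl (V : finType) (adj : rel V) (D : {set V}) k x :
  x \in D -> dle adj D k x x.
Proof. move=> xD; elim: k => [|k IH] /=; first by []. by exists x; split => //; split => //; left. Qed.

Lemma dle_symT (V : finType) (adj : rel V) k x y :
  symmetric adj -> dle adj setT k x y -> dle adj setT k y x.
Proof.
move=> Hs; elim: k y => [|k IH] y /=; first by move=> ->.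
case=> z [_ [/IH Hzx Hzy]].
have H1 : dle adj setT 1 y z.
  by exists y; split; [rewrite inE | split => //; case: Hzy => [->|]; [left|right; rewrite Hs]].
by have := dle_concat H1 Hzx.
Qed.

Lemma dle_fwd (V : finType) (adj : rel V) (D : {set V}) k x y :
  (forall y j, (j <= k)%N -> dle adj setT j x y -> y \in D) ->
  dle adj setT k x y -> dle adj D k x y.
Proof.
elim: k y => [|k IH] y H //=.
case=> z [_ [Hxz Hzy]]; exists z; split; first exact: (H z k (leqnSn k)).
split => //; apply: IH => // y' j jk; apply: H; exact: leq_trans jk (leqnSn k).
Qed.

Lemma dle_bwd (V : finType) (adj : rel V) (D : {set V}) k w v :
  (forall y j, (j <= k)%N -> dle adj setT j y v -> y \in D) ->
  dle adj setT k w v -> dle adj D k w v.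
Proof.
elim: k v => [|k IH] v H //=.
case=> z [_ [Hwz Hzv]]; exists z; split.
  by apply: (H z 1%N) => //; exists z; split; [rewrite inE|].
split => //; apply: IH => // y j jk Hyz; apply: (H y j.+1) => //.
by exists z; split; [rewrite inE|].
Qed.

Lemma lsat_loc (V : finType) (adj : rel V) (lab : nat -> {set V}) (D : {set V}) r x :
  (forall y j, (j <= r)%N -> dle adj setT j x y -> y \in D) ->
  forall f env, lsat adj lab D r x env f <-> lsat adj lab setT r x env f.
Proof.
move=> H; elim => [||t u|t u|c t|g IH|g IHg h IHh|g IHg h IHh|g IH|g IH] env //=.
- by split => Hn Hg; apply: Hn; apply/IH.
- by rewrite IHg IHh.
- by rewrite IHg IHh.
- split; case=> y [yD [dy Hy]]; exists y.
    by split; [rewrite inE|split; [exact: dle_sub (subsetT D) dy|apply/IH]].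
  split; first exact: (H y r (leqnn r)).
  by split; [exact: dle_fwd|apply/IH].
- split=> Hall y yD dy.
    apply/IH; apply: Hall; [exact: (H y r (leqnn r))|exact: dle_fwd].
  by apply/IH; apply: Hall; [rewrite inE|exact: dle_sub (subsetT D) dy].
Qed.

Lemma modz_lt (w : nat) (Hw : (0 < w)%N) (z : int) : (absz (z %% w%:Z)%Z < w)%N.
Proof.
have h1 : 0 <= (z %% w%:Z)%Z by apply: modz_ge0; lia.
have h2 : (z %% w%:Z)%Z < w%:Z by apply: ltz_pmod; lia.
lia.
Qed.

Definition mkord (w : nat) (Hw : (0 < w)%N) (z : int) : 'I_w := Ordinal (modz_lt Hw z).

Lemma good_block (w : nat) (Hw : (0 < w)%N) (c : nat) (a : int) (n : 'I_w) :
  (forall t : 'I_c, n != mkord Hw (a - (t : nat)%:Z)) ->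
  n%:Z + ((a - n%:Z) %/ w%:Z)%Z * w%:Z + c%:Z <= a /\
  a <= n%:Z + ((a - n%:Z) %/ w%:Z)%Z * w%:Z + w%:Z - 1.
Proof.
move=> H.
set q := ((a - n%:Z) %/ w%:Z)%Z.
have e : a - n%:Z = q * w%:Z + ((a - n%:Z) %% w%:Z)%Z := divz_eq _ _.
set t := ((a - n%:Z) %% w%:Z)%Z in e.
have t0 : 0 <= t by apply: modz_ge0; lia.
have tw : t < w%:Z by apply: ltz_pmod; lia.
case: (boolP (t < c%:Z)) => tc; last first.
  by rewrite -leNgt in tc; split; lia.
exfalso.
have tnc : (absz t < c)%N by lia.
apply/negP: (H (Ordinal tnc)); rewrite negbK; apply/eqP/val_inj => /=.
have -> : a - (absz t)%:Z = q * w%:Z + n%:Z by lia.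
rewrite modzMDl modz_small; first by [].
apply/andP; split; first by [].
have := ltn_ord n; lia.
Qed.

Lemma sum_eq_count (s : seq int) (c : int) :
  (\sum_(q <- s) (c == q : nat))%N = count_mem c s.
Proof. by elim: s => [|x s IH]; rewrite ?big_nil ?big_cons //= IH eq_sym. Qed.

Lemma sum_eq_count2 (s : seq int) (c : int) (e : nat) :
  (\sum_(q <- s) ((q == c : nat) * e))%N = (count_mem c s * e)%N.
Proof. by elim: s => [|x s IH]; rewrite ?big_nil ?big_cons //= IH mulnDl. Qed.

Lemma plan_gen (T : finType) (f : T -> int) (A : {set T}) (e : nat) :
  is_plan (#|A| + e) (fun q => #|[set x in A | f x == q]| + (nat_of_bool (q == 0%R) * e))%N.
Proof.
set s := undup (0%R :: [seq f x | x <- enum A]).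
exists s; split; first exact: undup_uniq.
split.
  move=> q; rewrite mem_undup inE negb_or => /andP [q0 qn].
  rewrite (negbTE q0) mul0n addn0; apply/eqP; rewrite cards_eq0; apply/eqP/setP => x.
  rewrite !inE; apply/negP => /andP [xA /eqP fx].
  by move: qn; rewrite -fx map_f // mem_enum.
rewrite big_split /=.
have -> : (\sum_(q <- s) (nat_of_bool (q == 0%R) * e))%N = e.
  by rewrite sum_eq_count2 count_uniq_mem ?undup_uniq // mem_undup mem_head mul1n.
congr (_ + _)%N.
transitivity (\sum_(q <- s) \sum_(x in A) (f x == q : nat))%N.
  apply: eq_bigr => q _; rewrite -sum1_card.
  rewrite (eq_bigl (fun x => (x \in A) && (f x == q))); last by move=> x; rewrite !inE.
  rewrite big_mkcondr /=.
  apply: eq_bigr => x _; by case: (f x == q).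
rewrite exchange_big /= -sum1_card; apply: eq_bigr => x xA.
rewrite sum_eq_count count_uniq_mem ?undup_uniq //.
by rewrite mem_undup inE map_f ?orbT // mem_enum.
Qed.

Lemma maxset_ex (T : finType) (Pr : {set T} -> Prop) :
  Pr set0 -> exists X, Pr X /\ forall S, Pr S -> (#|S| <= #|X|)%N.
Proof.
move=> P0; apply: NNPP => H.
have H' : forall X, Pr X -> exists S, Pr S /\ (#|X| < #|S|)%N.
  move=> X PX; apply: NNPP => H2; apply: H; exists X; split => // S PS.
  rewrite leqNgt; apply/negP => lt; apply: H2; by exists S.
have Hk : forall k, exists X, Pr X /\ (k <= #|X|)%N.
  elim => [|k [X [PX kX]]]; first by exists set0.
  have [S [PS lt]] := H' X PX; exists S; split => //; exact: leq_ltn_trans kX lt.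
have [X [_ lt]] := Hk #|T|.+1.
by have := max_card X; rewrite leqNgt lt.
Qed.

Lemma block_unique (w q q' c b : int) : 0 < w -> c + q*w <= b -> b <= c + q*w + w - 1 ->
  c + q'*w <= b -> b <= c + q'*w + w - 1 -> q = q'.
Proof. move=> *; nia. Qed.

Lemma ball_fwd (V : finType) (adj : rel V) (lam : V -> int) (i : int) (l r r' : nat) x :
  layering adj lam -> (r' <= r)%N -> i + r%:Z <= lam x -> lam x <= i + l%:Z - r%:Z - 1 ->
  forall y j, (j <= r')%N -> dle adj setT j x y -> y \in layer_set lam i l 0.
Proof.
move=> Hl Hr h1 h2 y j jr /(dle_lam Hl) h3; rewrite inE; apply/andP; split; lia.
Qed.

Lemma ball_bwd (V : finType) (adj : rel V) (lam : V -> int) (i : int) (l r r' : nat) x :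
  layering adj lam -> (r' <= r)%N -> i + r%:Z <= lam x -> lam x <= i + l%:Z - r%:Z - 1 ->
  forall y j, (j <= r')%N -> dle adj setT j y x -> y \in layer_set lam i l 0.
Proof.
move=> Hl Hr h1 h2 y j jr /(dle_lam Hl) h3; rewrite inE; apply/andP; split; lia.
Qed.

Lemma far_equiv (V : finType) (adj : rel V) (lam : V -> int) (i : int) (l r r' : nat) u v :
  layering adj lam -> (r' <= r)%N ->
  i + r%:Z <= lam u -> lam u <= i + l%:Z - r%:Z - 1 ->
  i + r%:Z <= lam v -> lam v <= i + l%:Z - r%:Z - 1 ->
  dle adj setT (2 * r') u v -> dle adj (layer_set lam i l 0) (2 * r') u v.
Proof.
move=> Hl Hr u1 u2 v1 v2; rewrite mul2n -addnn => /dle_split [w [Huw Hwv]].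
apply: dle_concat.
  exact: dle_fwd (ball_fwd Hl Hr u1 u2) Huw.
exact: dle_bwd (ball_bwd Hl Hr v1 v2) Hwv.
Qed.
Unset Implicit Arguments.
Theorem mainTheorem14 (ex : bool) (m r' : nat) (psi : lform)
    (V : finType) (adj : rel V) (lab : nat -> {set V})
    (Hsym : symmetric adj) (Hirr : irreflexive adj)
    (HG : basic_sat adj lab [set: V] ex m r' psi)
    (lam : V -> int) (Hlam : layering adj lam)
    (r l : nat) (Hr : (r' <= r)%N) (Hl : (2 * r * (3 * m + 1) < l)%N) :
  exists B : {set 'I_(l - 2 * r)}, (#|B| <= 6 * r * m)%N /\
    forall n : 'I_(l - 2 * r), n \notin B ->
      exists p : int -> nat, is_plan m p /\
        forall q : int,
          let i := (nat_of_ord n)%:Z + q * (l - 2 * r)%:Z in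
          variant_sat adj lab (layer_set lam i l 0) (layer_set lam i l (2 * r))
            (layer_set lam i l r) ex r' psi (p q).
Proof.
have Hw : (0 < l - 2 * r)%N by nia.
case: ex HG => HG.
- case: HG => xs [_ [xsfar xspsi]].
  pose fB (jt : 'I_m * 'I_(2 * r)) := mkord Hw (lam (xs jt.1) - (nat_of_ord jt.2)%:Z).
  pose B := fB @: [set: 'I_m * 'I_(2 * r)].
  exists B; split.
    apply: leq_trans (leq_imset_card _ _) _.
    rewrite cardsT card_prod !card_ord; nia.
  move=> n nB.
  pose qj (j : 'I_m) := ((lam (xs j) - n%:Z) %/ (l - 2 * r)%:Z)%Z.
  have good j : n%:Z + qj j * (l - 2*r)%:Z + (2*r)%:Z <= lam (xs j) /\
      lam (xs j) <= n%:Z + qj j * (l - 2*r)%:Z + (l - 2*r)%:Z - 1.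
    apply: good_block => t; apply/negP => /eqP E; move/negP: nB; apply.
    by rewrite E; apply/imsetP; exists (j, t); rewrite ?inE.
  exists (fun q => #|[set j in [set: 'I_m] | qj j == q]| + (nat_of_bool (q == 0%R) * 0))%N.
  split; first by have := plan_gen qj [set: 'I_m] 0; rewrite cardsT card_ord addn0.
  move=> q; rewrite /variant_sat /= muln0 addn0.
  set J := [set j in [set: 'I_m] | qj j == q].
  pose xs' : 'I_#|J| -> V := fun t => xs (enum_val t).
  exists xs'.
  have lamJ : forall t : 'I_#|J|, n%:Z + q * (l - 2*r)%:Z + (2*r)%:Z <= lam (xs' t) /\ lam (xs' t) <= n%:Z + q*(l-2*r)%:Z + (l - 2*r)%:Z - 1.
    move=> t; have := enum_valP t; rewrite inE => /andP [_ /eqP <-]; exact: good.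
  split.
    move=> t; have [h1 h2] := lamJ t; rewrite inE; apply/andP; split; lia.
  split.
    move=> t1 t2 lt12 Hd.
    have ne : enum_val t1 != enum_val t2.
      apply/negP => /eqP /enum_val_inj E; by rewrite E ltnn in lt12.
    have HdT := dle_sub (subsetT _) Hd.
    case: (ltngtP (enum_val t1) (enum_val t2)) => c.
    - exact: xsfar c HdT.
    - exact: xsfar c (dle_symT Hsym HdT).
    - by move/val_inj: c ne => ->; rewrite eqxx.
  move=> t; have [h1 h2] := lamJ t; split.
    rewrite inE; apply/andP; split; lia.
  have h3 : n%:Z + q * (l - 2*r)%:Z + r%:Z <= lam (xs' t) by lia.
  have h4 : lam (xs' t) <= n%:Z + q * (l - 2*r)%:Z + l%:Z - r%:Z - 1 by lia.
  rewrite /core_sat; apply/(lsat_loc lab (ball_fwd Hlam Hr h3 h4) psi [::]).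
  exact: xspsi.
- pose Pr (S : {set V}) := (forall v, v \in S -> ~ core_sat adj lab setT r' psi v) /\
     (forall u v, u \in S -> v \in S -> u != v -> ~ dle adj setT (2 * r') u v).
  have [X [[XN Xfar] Xmax]] : exists X, Pr X /\ forall S, Pr S -> (#|S| <= #|X|)%N.
    apply: (@maxset_ex V Pr); split => [v|u v]; by rewrite inE.
  have Xm : (#|X| <= m)%N.
    rewrite leqNgt; apply/negP => Hlt.
    pose xs : 'I_m.+1 -> V := fun t => enum_val (widen_ord Hlt t).
    have xsX t : xs t \in X by apply: enum_valP.
    have xsfar : forall t1 t2 : 'I_m.+1, (t1 < t2)%N -> ~ dle adj setT (2 * r') (xs t1) (xs t2).
      move=> t1 t2 lt12; apply: Xfar; rewrite ?xsX //.
      apply/negP => /eqP /enum_val_inj /(congr1 val) /= E.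
      by rewrite E ltnn in lt12.
    have [t Ht] := HG xs (fun _ => in_setT _) xsfar.
    exact: XN (xsX t) Ht.
  pose fB (xt : V * 'I_(4 * r)) := mkord Hw (lam xt.1 + r%:Z - (nat_of_ord xt.2)%:Z).
  pose B := fB @: setX X [set: 'I_(4 * r)].
  exists B; split.
    apply: leq_trans (leq_imset_card _ _) _.
    rewrite cardsX cardsT card_ord; nia.
  move=> n nB.
  pose qx (x : V) := ((lam x + r%:Z - n%:Z) %/ (l - 2 * r)%:Z)%Z.
  have good x : x \in X -> n%:Z + qx x * (l - 2*r)%:Z + (4*r)%:Z <= lam x + r%:Z /\
      lam x + r%:Z <= n%:Z + qx x * (l - 2*r)%:Z + (l - 2*r)%:Z - 1.
    move=> xX; apply: good_block => t; apply/negP => /eqP E; move/negP: nB; apply.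
    by rewrite E; apply/imsetP; exists (x, t); rewrite ?inE ?xX.
  exists (fun q => #|[set x in X | qx x == q]| + (nat_of_bool (q == 0%R) * (m - #|X|)))%N.
  split; first by have := plan_gen qx X (m - #|X|); rewrite subnKC.
  move=> q; rewrite /variant_sat /=.
  set Xq := [set x in X | qx x == q].
  set k := (#|Xq| + _)%N.
  move=> ys yD yM yfar.
  have ylam t : n%:Z + q * (l - 2*r)%:Z + r%:Z <= lam (ys t) /\
      lam (ys t) <= n%:Z + q * (l - 2*r)%:Z + l%:Z - r%:Z - 1.
    by have := yM t; rewrite inE => /andP [h1 h2].
  apply: NNPP => Hn.
  have yN t : ~ core_sat adj lab setT r' psi (ys t).
    move=> Hc; apply: Hn; exists t.
    have [h1 h2] := ylam t.
    by rewrite /core_sat; apply/(lsat_loc lab (ball_fwd Hlam Hr h1 h2) psi [::]).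
  have ydT t1 t2 : t1 != t2 -> ~ dle adj setT (2 * r') (ys t1) (ys t2).
    move=> ne Hd.
    have [a1 a2] := ylam t1; have [b1 b2] := ylam t2.
    case: (ltngtP t1 t2) => c.
    - exact: yfar c (far_equiv Hlam Hr a1 a2 b1 b2 Hd).
    - exact: yfar c (far_equiv Hlam Hr b1 b2 a1 a2 (dle_symT Hsym Hd)).
    - by move/val_inj: c ne => ->; rewrite eqxx.
  have yinj : injective ys.
    move=> t1 t2 E; apply/eqP/negPn/negP => ne; apply: (ydT _ _ ne); rewrite E.
    exact: dle_refl (in_setT _).
  have cross x t : x \in X -> x \notin Xq -> `|lam (ys t) - lam x| <= (2*r)%:Z -> False.
    move=> xX xq Hd; move: xq; rewrite inE xX /=; apply/negP; rewrite negbK; apply/eqP.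
    have [g1 g2] := good x xX; have [h1 h2] := ylam t.
    symmetry; apply: (@block_unique (l - 2*r)%:Z _ _ (n%:Z + r%:Z) (lam (ys t))); lia.
  pose Y := ys @: [set: 'I_k.+1].
  have cY : #|Y| = k.+1 by rewrite card_imset // cardsT card_ord.
  pose Z := Y :|: (X :\: Xq).
  have PZ : Pr Z.
    split.
      move=> v; rewrite in_setU in_setD => /orP [/imsetP [t _ ->]|/andP [_ vX]];
        [exact: yN|exact: XN].
    move=> u v; rewrite !in_setU !in_setD.
    case/orP => [/imsetP [t1 _ ->]|/andP [uq uX]];
      case/orP => [/imsetP [t2 _ ->]|/andP [vq vX]] ne Hd.
    - by apply: (ydT t1 t2) Hd; apply: contraNneq ne => ->.
    - by apply: (cross v t1 vX vq); have := dle_lam Hlam Hd; lia.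
    - by apply: (cross u t2 uX uq); have := dle_lam Hlam Hd; lia.
    - exact: Xfar uX vX ne Hd.
  have := Xmax Z PZ.
  have I0 : Y :&: (X :\: Xq) = set0.
    apply/setP => v; rewrite in_setI in_setD in_set0; apply/negP.
    case/andP => [/imsetP [t _ ->] /andP [tq tX]]; apply: (cross _ t tX tq).
    by rewrite subrr normr0.
  have XqX : Xq \subset X by apply/subsetP => x; rewrite inE => /andP [].
  have cXq := subset_leq_card XqX.
  rewrite cardsU I0 cards0 subn0 cardsD (setIidPr XqX) cY.
  rewrite /k; lia.
Qed.
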